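(* Let $K,L,T$ be positive integers and let $(\alpha,\beta)\in\mathcal{A}(K,L,T)$ be a degree table, with $N=\operatorname{N}(\alpha,\beta)$. Then: (1) $KL+\max\{K,L\}+2T-1 \le N$; (2) if $3\max\{K,L\}+3T-2 < KL$ or $2 \le K = L$, then $KL+\max\{K,L\}+2T \le N$; (3) $KL+K+L+2T-1-T\min\{K,L,T\} \le N$.
   Context: A degree table with parameters $K,L,T$ is a tuple $(\alpha_{\mathrm p},\alpha_{\mathrm s},\beta_{\mathrm p},\beta_{\mathrm s})$ of nonnegative integer vectors of lengths $K,T,L,T$ respectively such that, writing $\alpha=(\alpha_{\mathrm p}\mid\alpha_{\mathrm s})$ and $\beta=(\beta_{\mathrm p}\mid\beta_{\mathrm s})$ for the concatenations: (i) all entries of $\alpha$ are distinct; (ii) all entries of $\beta$ are distinct; (iii) for every integer $n\in\operatorname{Set}(\alpha_{\mathrm p})+\operatorname{Set}(\beta_{\mathrm p})$ there is a unique $i\in\operatorname{Set}(\alpha)$ and a unique $j\in\operatorname{Set}(\beta)$ with $n=i+j$. Here $\operatorname{Set}(v)$ is the set of entries of $v$ and $A+B=\{a+b:a\in A,b\in B\}$. $\mathcal{A}(K,L,T)$ denotes the set of all such degree tables, and $\operatorname{N}(\alpha,\beta)=|\operatorname{Set}(\alpha)+\operatorname{Set}(\beta)|$. *)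

(* Defs.v *)
From mathcomp Require Import all_boot all_order all_algebra.
Set Implicit Arguments. Unset Strict Implicit. Unset Printing Implicit Defensive.

Definition degree_table (K L T : nat) (ap as_ bp bs : seq nat) : Prop :=
  [/\ size ap = K, size as_ = T, size bp = L & size bs = T] /\
  [/\ uniq (ap ++ as_),
      uniq (bp ++ bs) &
      forall n : nat,
        (exists a b, [/\ a \in ap, b \in bp & n = a + b]) ->
        exists! ij : nat * nat,
          [/\ ij.1 \in ap ++ as_, ij.2 \in bp ++ bs & n = ij.1 + ij.2] ].

Definition sumset_card (alpha beta : seq nat) : nat :=
  size (undup [seq i + j | i <- alpha, j <- beta]).

(* Main.v *)
Require Import Defs.
From mathcomp Require Import all_boot all_order all_algebra.
From mathcomp Require Import zify.
Set Implicit Arguments. Unset Strict Implicit. Unset Printing Implicit Defensive.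


Lemma ex_min (s : seq nat) : s != [::] ->
  exists2 m, m \in s & forall x, x \in s -> m <= x.
Proof.
elim: s => [//|y s IH] _.
case: s IH => [|z s] IH.
  by exists y; [rewrite mem_head | move=> x; rewrite inE => /eqP->].
have [m ms Hm] := IH isT.
case: (leqP y m) => hym.
- exists y; first by rewrite mem_head.
  move=> x; rewrite inE => /orP[/eqP->//|/Hm]; exact: leq_trans hym.
- exists m; first by rewrite inE ms orbT.
  move=> x; rewrite inE => /orP[/eqP->|/Hm//]; exact: ltnW.
Qed.

Lemma ex_max (s : seq nat) : s != [::] ->
  exists2 m, m \in s & forall x, x \in s -> x <= m.
Proof.
elim: s => [//|y s IH] _.
case: s IH => [|z s] IH.
  by exists y; [rewrite mem_head | move=> x; rewrite inE => /eqP->].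
have [m ms Hm] := IH isT.
case: (leqP m y) => hym.
- exists y; first by rewrite mem_head.
  move=> x; rewrite inE => /orP[/eqP->//|/Hm] h; exact: leq_trans h hym.
- exists m; first by rewrite inE ms orbT.
  move=> x; rewrite inE => /orP[/eqP->|/Hm//]; exact: ltnW.
Qed.

Lemma ex_min2 (s : seq nat) : uniq s -> 2 <= size s ->
  exists m1 m2, [/\ m1 \in s, m2 \in s, m1 < m2 &
     forall x, x \in s -> x = m1 \/ m2 <= x].
Proof.
move=> us hs.
have ne : s != [::] by case: s hs us.
have [m1 m1s H1] := ex_min ne.
have ne2 : rem m1 s != [::].
  apply/eqP=> h; move: (size_rem m1s); rewrite h /=; lia.
have [m2 m2s H2] := ex_min ne2.
move: m2s; rewrite (mem_rem_uniq _ us) inE => /andP[m2n m2s].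
exists m1, m2; split => //.
  by rewrite ltn_neqAle eq_sym m2n H1.
move=> x xs; case: (altP (x =P m1)) => [->|xn]; [by left|right].
by apply: H2; rewrite (mem_rem_uniq _ us) inE xn.
Qed.

Lemma count_lt_gt (X : seq nat) x :
  count (fun a => a < x) X + count (fun a => x < a) X + count (pred1 x) X = size X.
Proof.
elim: X => //= y X IH.
case: (ltngtP y x) => h /=; rewrite ?(eqn_leq y x) ?h /=; try lia.
Qed.

Definition chain (X Y : seq nat) (x y1 yT : nat) :=
  [seq a + y1 | a <- [seq a <- X | a < x]] ++ [seq x + t | t <- Y] ++
  [seq a + yT | a <- [seq a <- X | x < a]].

Lemma chain_size X Y x y1 yT : uniq X -> x \in X ->
  size (chain X Y x y1 yT) = (size X).-1 + size Y.
Proof.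
move=> uX xX; rewrite /chain !size_cat !size_map !size_filter.
have := count_lt_gt X x; rewrite (count_uniq_mem x uX) xX /=; lia.
Qed.

Lemma chain_uniq X Y x y1 yT : uniq X -> uniq Y -> y1 <= yT ->
  (forall t, t \in Y -> y1 <= t <= yT) -> uniq (chain X Y x y1 yT).
Proof.
move=> uX uY h1T hY; rewrite /chain !cat_uniq.
rewrite !(map_inj_uniq (@addIn _)) !(map_inj_uniq (@addnI _)) !filter_uniq //=.
rewrite uY has_cat negb_or /= -andbA; apply/and3P; split.
- apply/hasPn => q /mapP[t tY ->]; apply/mapP => -[a]; rewrite mem_filter.
  case/andP=> ha _ e; have := hY t tY; lia.
- apply/hasPn => q /mapP[a]; rewrite mem_filter => /andP[ha _] ->.
  apply/mapP => -[a']; rewrite mem_filter => /andP[ha' _] e; lia.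
- rewrite andbT; apply/hasPn => q /mapP[a]; rewrite mem_filter => /andP[ha _] ->.
  apply/mapP => -[t tY e]; have := hY t tY; lia.
Qed.

Lemma chain_sub X Y x y1 yT : x \in X -> y1 \in Y -> yT \in Y ->
  {subset chain X Y x y1 yT <= [seq a + t | a <- X, t <- Y]}.
Proof.
move=> xX y1Y yTY q; rewrite /chain !mem_cat => /or3P[] /mapP.
- by case=> a; rewrite mem_filter => /andP[_ aX] ->; apply/allpairsP; exists (a, y1).
- by case=> t tY ->; apply/allpairsP; exists (x, t).
- by case=> a; rewrite mem_filter => /andP[_ aX] ->; apply/allpairsP; exists (a, yT).
Qed.

Lemma chain_mem q X Y x y1 yT : q \in chain X Y x y1 yT ->
  [\/ exists2 a, a \in X & a < x /\ q = a + y1,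
      exists2 t, t \in Y & q = x + t |
      exists2 a, a \in X & x < a /\ q = a + yT].
Proof.
rewrite /chain !mem_cat => /or3P[] /mapP.
- by case=> a; rewrite mem_filter => /andP[h aX] ->; apply: Or31; exists a.
- by case=> t tY ->; apply: Or32; exists t.
- by case=> a; rewrite mem_filter => /andP[h aX] ->; apply: Or33; exists a.
Qed.


Definition UQ (ap as_ bp bs : seq nat) :=
  forall a b x y, a \in ap -> b \in bp -> x \in ap ++ as_ -> y \in bp ++ bs ->
    a + b = x + y -> x = a /\ y = b.

Definition NPg (ap as_ bp bs : seq nat) (q : nat) :=
  exists x y, [/\ x \in ap ++ as_, y \in bp ++ bs, (x \in as_) || (y \in bs) & q = x + y].

Lemma uniq_cat_disj (s1 s2 : seq nat) x : uniq (s1 ++ s2) -> x \in s1 -> x \in s2 -> False.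
Proof. rewrite cat_uniq => /and3P[_ /hasPn h _] x1 x2. by move: (h x x2); rewrite x1. Qed.

Lemma UQ_sym ap as_ bp bs : UQ ap as_ bp bs -> UQ bp bs ap as_.
Proof.
move=> h b a y x hb ha hy hx e.
have [] := h a b x y ha hb hx hy; first lia.
by move=> -> ->.
Qed.

Lemma NPg_sym ap as_ bp bs q : NPg bp bs ap as_ q -> NPg ap as_ bp bs q.
Proof.
case=> y [x] [hy hx h ->]; exists x, y; split => //; first by rewrite orbC.
by rewrite addnC.
Qed.

Lemma base_count ap as_ bp bs Q :
  uniq (ap ++ as_) -> uniq (bp ++ bs) -> UQ ap as_ bp bs ->
  uniq Q -> (forall q, q \in Q -> NPg ap as_ bp bs q) ->
  size ap * size bp + size Q <= sumset_card (ap ++ as_) (bp ++ bs).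
Proof.
move=> uA uB hU uQ hQ.
set P := [seq a + b | a <- ap, b <- bp].
have uap : uniq ap by move: uA; rewrite cat_uniq => /andP[].
have ubp : uniq bp by move: uB; rewrite cat_uniq => /andP[].
have uP : uniq P.
  apply: allpairs_uniq => // -[a b] [a' b'] /allpairsP[[a1 b1] [/= h1 h2 [-> ->]]].
  move=> /allpairsP[[a2 b2] [/= h3 h4 [-> ->]]] /= e.
  have [e1 e2] : a2 = a1 /\ b2 = b1 by apply: hU => //; rewrite mem_cat ?h3 ?h4.
  by rewrite e1 e2.
have uPQ : uniq (P ++ Q).
  rewrite cat_uniq uP uQ andbT; apply/hasPn => q qQ; apply/negP.
  case/allpairsP => -[a b] [/= ha hb eq].
  have [x [y [hx hy hxy eq']]] := hQ q qQ.
  have [ex ey] := hU a b x y ha hb hx hy (etrans (esym eq) eq').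
  subst x y; case/orP: hxy => h.
  - exact: (uniq_cat_disj uA ha h).
  - exact: (uniq_cat_disj uB hb h).
rewrite /sumset_card; apply: leq_trans (_ : size (P ++ Q) <= _); first by rewrite size_cat size_allpairs.
apply: uniq_leq_size => // q; rewrite mem_cat mem_undup => /orP[].
- case/allpairsP => -[a b] [/= ha hb ->]; apply/allpairsP; exists (a, b).
  by rewrite /= !mem_cat ha hb.
- move=> /hQ [x [y [hx hy _ ->]]]; apply/allpairsP; by exists (x, y).
Qed.

Lemma chain1 (X Y : seq nat) : uniq X -> uniq Y -> X != [::] -> Y != [::] ->
  exists Q, [/\ uniq Q, size Q = (size X).-1 + size Y &
     {subset Q <= [seq a + t | a <- X, t <- Y]}].
Proof.
move=> uX uY nX nY.
have [x xX _] := ex_min nX.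
have [y1 y1Y H1] := ex_min nY.
have [yT yTY HT] := ex_max nY.
exists (chain X Y x y1 yT); split.
- apply: chain_uniq => //; first exact: H1.
  by move=> t tY; rewrite H1 ?HT.
- exact: chain_size.
- exact: chain_sub.
Qed.

Lemma count_or (p q : pred nat) s : count (fun b => p b || q b) s <= count p s + count q s.
Proof.
have e : count (fun b => p b || q b) s = count (predU p q) s by [].
have := count_predUI p q s; lia.
Qed.

Lemma count_has_le (P : nat -> nat -> bool) (f : nat -> nat) l s :
  (forall y, y \in l -> count (fun b => P b y) s <= f y) ->
  count (fun b => has (P b) l) s <= sumn [seq f y | y <- l].
Proof.
elim: l => [|y l IH] h /=; first by clear h; elim: s.
apply: leq_trans (count_or _ _ _) _.
apply: leq_add; first by apply: h; rewrite mem_head.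
by apply: IH => z zl; apply: h; rewrite inE zl orbT.
Qed.

Lemma sumn_const (c : nat) (l : seq nat) : sumn [seq c | _ <- l] = size l * c.
Proof. by elim: l => //= y l ->; rewrite mulSn. Qed.

Lemma sumn_bool (p : pred nat) (l : seq nat) : sumn [seq nat_of_bool (p y) | y <- l] = count p l.
Proof. by elim: l => //= y l ->. Qed.

Lemma count_le1 (P : pred nat) (s : seq nat) : uniq s ->
  (forall b b', b \in s -> b' \in s -> P b -> P b' -> b = b') -> count P s <= 1.
Proof.
elim: s => //= y s IH /andP[ys us] h.
case Py: (P y) => /=.
- suff -> : count P s = 0 by [].
  apply/eqP; rewrite -leqn0 leqNgt -has_count; apply/hasP => -[z zs Pz].
  have zin : z \in y :: s by rewrite inE zs orbT.
  have e := h y z (mem_head _ _) zin Py Pz.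
  by move: ys; rewrite e zs.
- apply: IH => // b b' hb hb'; apply: h; by rewrite inE ?hb ?hb' orbT.
Qed.

Lemma bad_count ap as_ bp bs s :
  uniq (ap ++ as_) -> uniq (bp ++ bs) -> UQ ap as_ bp bs -> s \in as_ ->
  count (fun b => s + b \in [seq x + t | x <- ap ++ as_, t <- bs]) bp
    <= size bs * size as_.
Proof.
move=> uA uB hU sas.
have uas : uniq as_ by move: uA; rewrite cat_uniq => /and3P[].
have ubp : uniq bp by move: uB; rewrite cat_uniq => /andP[].
have e : forall b, (s + b \in [seq x + t | x <- ap ++ as_, t <- bs]) =
    has (fun t => has (fun x => s + b == x + t) (ap ++ as_)) bs.
  move=> b; apply/allpairsP/hasP.
  - case=> -[x t] [/= hx ht eq]; exists t => //; apply/hasP; exists x => //; exact/eqP.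
  - case=> t ht /hasP[x hx /eqP eq]; by exists (x, t).
rewrite (eq_count e) -sumn_const.
apply: count_has_le => t tbs.
rewrite (@eq_count _ _ (fun b => has (fun x => s + b == x + t) ap ||
     has (fun x => s + b == x + t) as_)); last by move=> b; rewrite has_cat.
apply: leq_trans (count_or _ _ _) _.
have h1 : count (fun b => has (fun x => s + b == x + t) ap) bp <= 1.
  apply: count_le1 => // b b' hb hb' /hasP[x hx /eqP e1] /hasP[x' hx' /eqP e2].
  have [] := hU x b' x' b hx hb'; rewrite ?mem_cat ?hx' ?hb //; first lia.
have h2 : count (fun b => has (fun x => s + b == x + t) as_) bp <= (size as_).-1.
  have := @count_has_le (fun b x => s + b == x + t) (fun x => nat_of_bool (x != s)) as_ bp.
  rewrite sumn_bool => H; apply: leq_trans (H _) _.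
  - move=> x xas; case: (altP (x =P s)) => [->|xs] /=.
    + rewrite leqn0 -(count_pred0 bp); apply/eqP/eq_in_count => b hb /=.
      apply/eqP => /eqP; rewrite eqn_add2l => /eqP ebt; subst b.
      exact: (uniq_cat_disj uB hb tbs).
    + apply: count_le1 => // b b' _ _ /eqP e1 /eqP e2; lia.
  - have := count_predC (pred1 s) as_; rewrite (count_uniq_mem s uas) sas.
    have -> : count (predC (pred1 s)) as_ = count (fun x => x != s) as_ by [].
    lia.
have : 0 < size as_ by rewrite lt0n size_eq0; apply/eqP => h0; rewrite h0 in sas.
lia.
Qed.


Ltac nsz := change (@size (Equality.sort Datatypes_nat__canonical__eqtype_Equality)) with (@size nat) in *.

Lemma size1_eq (s : seq nat) x y : size s = 1 -> x \in s -> y \in s -> x = y.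
Proof. by case: s => [|z [|]] //= _; rewrite !inE => /eqP-> /eqP->. Qed.

Lemma core2 ap as_ bp bs : uniq (ap ++ as_) -> uniq (bp ++ bs) -> UQ ap as_ bp bs ->
  2 <= size bp -> size as_ = size bs -> 0 < size bs ->
  exists Q, [/\ uniq Q, size (ap ++ as_) + size bs <= size Q &
    forall q, q \in Q -> NPg ap as_ bp bs q].
Proof.
move=> uA uB hU Lb eT Tb.
set A := ap ++ as_.
set AB := [seq a + t | a <- A, t <- bs].
set S := undup AB.
have ubs : uniq bs by move: uB; rewrite cat_uniq => /and3P[].
have ubp : uniq bp by move: uB; rewrite cat_uniq => /and3P[].
have uas : uniq as_ by move: uA; rewrite cat_uniq => /and3P[].
have nA : A != [::] by rewrite -size_eq0 size_cat; lia.
have nB : bs != [::] by rewrite -size_eq0; lia.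
have nas : as_ != [::] by rewrite -size_eq0; lia.
have inA1 : forall s, s \in as_ -> s \in A by move=> s h; rewrite mem_cat h orbT.
have inA2 : forall s, s \in ap -> s \in A by move=> s h; rewrite mem_cat h.
have inB1 : forall t, t \in bs -> t \in bp ++ bs by move=> t h; rewrite mem_cat h orbT.
have inB2 : forall t, t \in bp -> t \in bp ++ bs by move=> t h; rewrite mem_cat h.
have bnot : forall b t, b \in bp -> t \in bs -> b <> t.
  by move=> b t hb ht ebt; subst; exact: (uniq_cat_disj uB hb ht).
have hS : forall q, q \in S -> NPg ap as_ bp bs q.
  move=> q; rewrite mem_undup => /allpairsP[[x y] [/= hx hy ->]].
  by exists x, y; split => //; rewrite ?mem_cat hy ?orbT.
have [x0 x0A _] := ex_min nA.
have [t1 t1B H1] := ex_min nB.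
have [tT tTB HT] := ex_max nB.
have t1T : t1 <= tT by apply: HT.
have hY : forall t, t \in bs -> t1 <= t <= tT by move=> t ht; rewrite H1 ?HT.
have sS : (size A).-1 + size bs <= size S.
  rewrite -(chain_size bs t1 tT uA x0A).
  apply: uniq_leq_size; first exact: chain_uniq.
  by move=> q /(chain_sub x0A t1B tTB); rewrite mem_undup.
have sA : 0 < size A by rewrite size_cat; lia.
rewrite -subn1 in sS.
case: (leqP (size A + size bs) (size S)) => hbig.
  by exists S; split => //; exact: undup_uniq.
case: (boolP (has (fun s => has (fun b => s + b \notin AB) bp) as_)) => hh.
  case/hasP: hh => s sas /hasP[b bbp hn].
  exists ((s + b) :: S); split.
  - by rewrite /= undup_uniq mem_undup hn.
  - rewrite /=; nsz; clear -sS hbig; lia.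
  - move=> q; rewrite inE => /orP[/eqP->|/hS //].
    by exists s, b; split => //; [exact: inA1 | exact: inB2 | rewrite sas].
exfalso.
have hall : forall s b, s \in as_ -> b \in bp -> s + b \in AB.
  move=> s b hs hb; move/hasPn: hh => /(_ s hs) /hasPn /(_ b hb); by rewrite negbK.
have hch : forall x q, x \in A -> q \in AB -> q \in chain A bs x t1 tT.
  move=> x q xA qAB.
  have hsub : {subset chain A bs x t1 tT <= S}.
    by move=> q' h; rewrite mem_undup; exact: (chain_sub xA t1B tTB h).
  have hsz : size S <= size (chain A bs x t1 tT).
    rewrite (chain_size bs t1 tT uA xA) -subn1 -/A; nsz; clear -sS hbig sA; lia.
  have [_ e] := uniq_min_size (chain_uniq x uA ubs t1T hY) hsub hsz.
  by rewrite e mem_undup.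
have cls : forall s b, s \in as_ -> b \in bp ->
    (b < t1 /\ exists2 a, a \in A & a < s /\ s + b = a + t1) \/
    (tT < b /\ exists2 a, a \in A & s < a /\ s + b = a + tT).
  move=> s b hs hb.
  have := hch s (s + b) (inA1 s hs) (hall s b hs hb).
  case/chain_mem => [[a aA [h1 h2]]|[t tB h]|[a aA [h1 h2]]].
  - left; split; last by exists a.
    clear -h1 h2; lia.
  - by exfalso; apply: (bnot b t hb tB); clear -h; lia.
  - right; split; last by exists a.
    have bt : b <> tT by apply: bnot.
    clear -h1 h2 bt; lia.
have [smin sminA Hsmin] := ex_min nas.
have [smax smaxA Hsmax] := ex_max nas.
have below_ap : forall b, b \in bp -> b < t1 -> exists2 a, a \in ap & smin + b = a + t1.
  move=> b hb hlt; case: (cls smin b sminA hb) => [[_ [a aA [h1 h2]]]|[h _]]; last first.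
    by exfalso; clear -h hlt t1T; lia.
  exists a => //; move: aA; rewrite mem_cat => /orP[//|/Hsmin]; clear -h1; lia.
have above_ap : forall b, b \in bp -> tT < b -> exists2 a, a \in ap & smax + b = a + tT.
  move=> b hb hlt; case: (cls smax b smaxA hb) => [[h _]|[_ [a aA [h1 h2]]]].
    by exfalso; clear -h hlt t1T; lia.
  exists a => //; move: aA; rewrite mem_cat => /orP[//|/Hsmax]; clear -h1; lia.
have [m1 [m2 [m1B m2B m12 _]]] := ex_min2 ubp Lb.
have trick : forall b b' a a' c c', b \in bp -> b' \in bp -> a \in ap -> a' \in ap ->
    c + b = a + c' -> c + b' = a' + c' -> b = b'.
  move=> b b' a a' c c' hb hb' ha ha' e1 e2.
  have e : a + b' = a' + b by clear -e1 e2; lia.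
  by have [_ ->] := hU a b' a' b ha hb' (inA2 a' ha') (inB2 b hb) e.
have [hm1|hm1] : m1 < t1 \/ tT < m1.
  by case: (cls smin m1 sminA m1B) => -[h _]; [left|right].
all: have [hm2|hm2] : m2 < t1 \/ tT < m2 by
  case: (cls smin m2 sminA m2B) => -[h _]; [left|right].
- have [a ha e1] := below_ap m1 m1B hm1.
  have [a' ha' e2] := below_ap m2 m2B hm2.
  have := trick m1 m2 a a' smin t1 m1B m2B ha ha' e1 e2; clear -m12; lia.
-
  case: (boolP (size bs == 1)) => [/eqP T1|T2].
    have et : tT = t1 by apply: (size1_eq T1).
    have es : smax = smin by apply: (size1_eq (etrans eT T1)).
    have [a ha e1] := below_ap m1 m1B hm1.
    have [a' ha' e2] := above_ap m2 m2B hm2.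
    rewrite et es in e2.
    have := trick m1 m2 a a' smin t1 m1B m2B ha ha' e1 e2; clear -m12; lia.
  have T2' : 2 <= size bs by clear -T2 Tb; lia.
  have [u1 [t2 [u1B t2B u12 Hmin2]]] := ex_min2 ubs T2'.
  have et1 : u1 = t1.
    have := H1 u1 u1B; case: (Hmin2 t1 t1B) => [->|h] //.
    have := H1 u1 u1B; clear -h u12; lia.
  subst u1.
  have t2T : t2 <= tT by apply: HT.
  set d := t2 - t1.
  have d0 : 0 < d by rewrite /d; clear -u12; lia.
  have P : forall x x', x \in A -> x' \in A -> x < x' -> x + d \in A /\ x + d <= x'.
    move=> x x' xA x'A lt.
    have hin : x + t2 \in AB by apply/allpairsP; exists (x, t2).
    case/chain_mem: (hch x' (x + t2) x'A hin) => [[a aA [h1 h2]]|[t tB h]|[a aA [h1 h2]]].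
    - have -> : x + d = a by rewrite /d; clear -h2 u12; lia.
      split => //; clear -h1; lia.
    - have tlt : t < t2 by clear -h lt; lia.
      case: (Hmin2 t tB) => [et|h']; last by exfalso; clear -h' tlt; lia.
      subst t; have -> : x + d = x' by rewrite /d; clear -h u12; lia.
      by split.
    - by exfalso; clear -h1 h2 lt t2T; lia.
  have [amax amaxA Hamax] := ex_max nA.
  have mult : forall n y z, y \in A -> z \in A -> y <= z -> z - y <= n -> exists m, z = y + m * d.
    elim=> [|n IH] y z yA zA yz hn.
      by exists 0; clear -yz hn; lia.
    case: (boolP (y == z)) => [/eqP ->|ne]; first by exists 0; rewrite addn0.
    have lt : y < z by rewrite ltn_neqAle ne yz.
    have [yd ydz] := P y z yA zA lt.
    have hn' : z - (y + d) <= n by clear -hn d0 ydz; lia.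
    have [m e] := IH (y + d) z yd zA ydz hn'.
    by exists m.+1; rewrite mulSn; clear -e; lia.
  have up : forall m y, y \in A -> y + m * d <= amax -> y + m * d \in A.
    elim=> [|m IH] y yA h; first by rewrite mul0n addn0.
    move: h; rewrite mulSnr addnA => h.
    have h' : y + m * d <= amax by clear -h; lia.
    have hA := IH y yA h'.
    have lt : y + m * d < amax by clear -h d0; lia.
    by have [hh0 _] := P _ _ hA amaxA lt.
  have amaxap : amax \in ap.
    move: (amaxA); rewrite mem_cat => /orP[//|amaxas].
    case: (cls amax m2 amaxas m2B) => [[h _]|[_ [a aA [h1 _]]]].
      by exfalso; clear -h hm2 t1T; lia.
    by have := Hamax a aA; clear -h1; lia.
  case: (cls smin m1 sminA m1B) => [[_ [a aA [h1 h2]]]|[h _]]; last first.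
    by exfalso; clear -h hm1 t1T; lia.
  have sA' : smin \in A by apply: inA1.
  have [m e] := mult (amax - smin) smin amax sA' amaxA (Hamax smin sA') (leqnn _).
  have hle : a + m * d <= amax by clear -e h1; lia.
  have aA' := up m a aA hle.
  have e' : amax + m1 = (a + m * d) + t1 by clear -e h2; lia.
  have [_ ht] := hU amax m1 (a + m * d) t1 amaxap m1B aA' (inB1 t1 t1B) e'.
  by exfalso; clear -ht hm1; lia.
- clear -hm1 hm2 m12 t1T; lia.
- have [a ha e1] := above_ap m1 m1B hm1.
  have [a' ha' e2] := above_ap m2 m2B hm2.
  have := trick m1 m2 a a' smax tT m1B m2B ha ha' e1 e2; clear -m12; lia.
Qed.

Lemma lb_chain ap as_ bp bs : uniq (ap ++ as_) -> uniq (bp ++ bs) -> UQ ap as_ bp bs ->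
  0 < size as_ -> 0 < size bs ->
  exists Q, [/\ uniq Q, size Q = (size (ap ++ as_)).-1 + size bs,
    {subset Q <= [seq a + t | a <- ap ++ as_, t <- bs]} &
    forall q, q \in Q -> NPg ap as_ bp bs q].
Proof.
move=> uA uB hU ha hb.
have ubs : uniq bs by move: uB; rewrite cat_uniq => /and3P[].
have nA : ap ++ as_ != [::] by rewrite -size_eq0 size_cat; lia.
have nB : bs != [::] by rewrite -size_eq0; lia.
have [Q [uQ sQ subQ]] := chain1 uA ubs nA nB.
exists Q; split => // q /subQ /allpairsP[[x y] [/= hx hy ->]].
by exists x, y; split => //; rewrite ?mem_cat hy ?orbT.
Qed.

Import Order.TTheory GRing.Theory Num.Theory.

Theorem theorem2 (K L T : nat) (ap as_ bp bs : seq nat) :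
  0 < K -> 0 < L -> 0 < T ->
  degree_table K L T ap as_ bp bs ->
  let N := sumset_card (ap ++ as_) (bp ++ bs) in
  [/\ K * L + maxn K L + 2 * T - 1 <= N,
      (3 * maxn K L + 3 * T - 2 < K * L \/ (2 <= K /\ K = L)) ->
        K * L + maxn K L + 2 * T <= N
    & ((K * L + K + L + 2 * T)%:Z - 1 - (T * minn K (minn L T))%:Z <= N%:Z)%R ].
Proof.
move=> K0 L0 T0 [[sap sas sbp sbs] [uA uB hex]] N.
have hU : UQ ap as_ bp bs.
  move=> a b x y ha hb hx hy e.
  have hA : a \in ap ++ as_ by rewrite mem_cat ha.
  have hB : b \in bp ++ bs by rewrite mem_cat hb.
  have [[i j] [[/= hi hj hij] hu]] := hex (a + b) (ex_intro _ a (ex_intro _ b (And3 ha hb erefl))).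
  have e1 := hu (a, b) (And3 hA hB erefl).
  have e2 := hu (x, y) (And3 hx hy e).
  by case: (etrans (esym e2) e1) => -> ->.
have hU' := UQ_sym hU.
have sN : sumset_card (bp ++ bs) (ap ++ as_) = N.
  rewrite /N /sumset_card; apply: perm_size; apply: uniq_perm; rewrite ?undup_uniq //.
  move=> q; rewrite !mem_undup; apply/allpairsP/allpairsP => -[[x y] [/= hx hy ->]];
    by exists (y, x); rewrite addnC.
have szA : size (ap ++ as_) = K + T by rewrite size_cat sap sas.
have szB : size (bp ++ bs) = L + T by rewrite size_cat sbp sbs.
have pas : 0 < size as_ by lia.
have pbs : 0 < size bs by lia.
have pap : 0 < size ap by lia.
have pbp : 0 < size bp by lia.
have hK : K * L + (K + T - 1 + T) <= N.
  have [Q [uQ sQ _ hQ]] := lb_chain uA uB hU pas pbs.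
  have := base_count uA uB hU uQ hQ; rewrite sQ szA sap sbp sbs -subn1 -/N; lia.
have hL : K * L + (L + T - 1 + T) <= N.
  have [Q [uQ sQ _ hQ]] := lb_chain uB uA hU' pbs pas.
  have := base_count uB uA hU' uQ hQ; rewrite sQ szB sap sbp sas sN mulnC -subn1; lia.
split.
- rewrite /maxn; case: ifP => _; lia.
- move=> hyp; case: (leqP L K) => hLK.
  + rewrite (maxn_idPl hLK) in hyp *.
    have L2 : 2 <= L.
      case: hyp => [h|]; last lia.
      rewrite leqNgt; apply/negP => hl; have : K * L <= K by rewrite -{2}(muln1 K) leq_mul2l; apply/orP; right; lia.
      lia.
    have [Q [uQ sQ hQ]] := core2 uA uB hU (etrans (f_equal (leq 2) sbp) L2) (etrans sas (esym sbs)) pbs.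
    have := base_count uA uB hU uQ hQ; rewrite sap sbp -/N; move: sQ; rewrite szA sbs.
    lia.
  + rewrite (maxn_idPr (ltnW hLK)) in hyp *.
    have K2 : 2 <= K.
      case: hyp => [h|]; last lia.
      rewrite leqNgt; apply/negP => hl; have : K * L <= L by rewrite -{2}(mul1n L) leq_mul2r; apply/orP; right; lia.
      lia.
    have [Q [uQ sQ hQ]] := core2 uB uA hU' (etrans (f_equal (leq 2) sap) K2) (etrans sbs (esym sas)) pas.
    have hQ' : forall q, q \in Q -> NPg ap as_ bp bs q by move=> q /hQ /NPg_sym.
    have := base_count uA uB hU uQ hQ'; rewrite sap sbp -/N; move: sQ; rewrite szB sas.
    lia.
- have TK : K <= T * K by rewrite leq_pmull.
  have TL : L <= T * L by rewrite leq_pmull.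
  case: (boolP (T <= K)) => hTK; case: (boolP (T <= L)) => hTL; rewrite -?ltnNge in hTK hTL.
  + have -> : minn K (minn L T) = T by rewrite (minn_idPr hTL) (minn_idPr hTK).
    have [s sas_] : exists s, s \in as_.
      by case: (as_) sas => [|s l] /=; [lia | exists s; rewrite mem_head].
    have [Q [uQ sQ subQ hQ]] := lb_chain uA uB hU pas pbs.
    set AB := [seq a + t | a <- ap ++ as_, t <- bs].
    set R := [seq s + b | b <- [seq b <- bp | s + b \notin AB]].
    have ubp : uniq bp by move: uB; rewrite cat_uniq => /and3P[].
    have uQR : uniq (Q ++ R).
      rewrite cat_uniq uQ /R (map_inj_uniq (@addnI _)) filter_uniq // andbT.
      apply/hasPn => q /mapP[b]; rewrite mem_filter => /andP[hb _] ->.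
      by apply/negP => /subQ; apply/negP.
    have hQR : forall q, q \in Q ++ R -> NPg ap as_ bp bs q.
      move=> q; rewrite mem_cat => /orP[/hQ //|/mapP[b]].
      rewrite mem_filter => /andP[_ hb] ->.
      by exists s, b; rewrite sas_ !mem_cat sas_ hb orbT.
    have := base_count uA uB hU uQR hQR.
    have := bad_count uA uB hU sas_.
    have := count_predC (fun b => s + b \in AB) bp.
    rewrite size_cat sQ /R size_map size_filter szA sap sbp sas sbs.
    have -> : count (predC (fun b => s + b \in AB)) bp = count (fun b => s + b \notin AB) bp by [].
    rewrite -/AB -/N => h1 h2 h3; lia.
  + have -> : minn K (minn L T) = L by lia.
    lia.
  + have -> : minn K (minn L T) = K by lia.
    lia.
  + have [->|->] : minn K (minn L T) = K \/ minn K (minn L T) = L by lia.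
    all: lia.
Qed.
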